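(* Let $Q$ be a division ring with a surjective valuation $v:Q\to\mathbb{Z}\cup\{\infty\}$, valuation ring $R$, commutative residue field $L$, uniformizer $\pi$, and automorphism $\phi:L\to L$, $\bar x\mapsto\overline{\pi x\pi^{-1}}$. Let $V\subseteq Q^n$ be a right $Q$-vector subspace, and for $\alpha\in\mathbb{Z}^n$ set $V_\alpha:=\overline{(\pi^{-\alpha}V)\cap R^n}\subseteq L^n$. Then $(V_\alpha)_{\alpha\in\mathbb{Z}^n}$ is an $(L,\phi^{-1})$-linear flock.
   Context: $\pi^{-\alpha}$ denotes the diagonal matrix with entries $\pi^{-\alpha_1},\dots,\pi^{-\alpha_n}$ acting on $Q^n$ from the left, and the bar denotes coordinatewise reduction $R^n\to L^n$. For a field $L$ with automorphism $\psi$, an $(L,\psi)$-linear flock is a family of $L$-subspaces $(V_\alpha)_{\alpha\in\mathbb{Z}^n}$ of $L^n$, all of the same dimension, such that (1) for all $\alpha\in\mathbb{Z}^n$ and $1\le i\le n$, $V_\alpha/i=V_{\alpha+e_i}\setminus i$, where $W/i$ is the intersection of $W$ with the hyperplane $\{x_i=0\}$, $W\setminus i$ is the image of $W$ under setting the $i$-th coordinate to zero, and $e_i$ is the $i$-th standard basis vector of $\mathbb{Z}^n$; and (2) for all $\alpha$, $V_{\alpha+(1,\dots,1)}=\psi(V_\alpha)$, with $\psi$ applied coordinatewise. *)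

(* Defs.v *)
From HB Require Import structures.
From mathcomp Require Import all_boot all_order all_algebra.
Set Implicit Arguments. Unset Strict Implicit. Unset Printing Implicit Defensive.
Import Order.TTheory GRing.Theory Num.Theory.
Local Open Scope ring_scope.

Definition division_ring (Q : unitRingType) : Prop :=
  forall x : Q, x != 0 -> x \is a GRing.unit.

(* A valuation v : Q -> Z u {oo}, encoded as v : Q -> int where v 0 is
   meaningless (v 0 = oo by convention; all axioms only use v on nonzero
   elements). *)
Definition is_valuation (Q : unitRingType) (v : Q -> int) : Prop :=
  (forall x y : Q, x != 0 -> y != 0 -> v (x * y) = v x + v y) /\
  (forall x y : Q, x != 0 -> y != 0 -> x + y != 0 ->
      Num.min (v x) (v y) <= v (x + y)).

Definition surjective_valuation (Q : unitRingType) (v : Q -> int) : Prop :=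
  forall z : int, exists x : Q, x != 0 /\ v x = z.

Definition in_valring (Q : unitRingType) (v : Q -> int) (x : Q) : Prop :=
  x = 0 \/ 0 <= v x.

Definition in_maxideal (Q : unitRingType) (v : Q -> int) (x : Q) : Prop :=
  x = 0 \/ 0 < v x.

(* red : R -> L exhibits L as the residue field R / m (a ring surjection
   R -> L with kernel m); values of red outside R are irrelevant. *)
Definition is_residue_map (Q : unitRingType) (v : Q -> int)
    (L : fieldType) (red : Q -> L) : Prop :=
  [/\ red 1 = 1,
      (forall x y, in_valring v x -> in_valring v y -> red (x + y) = red x + red y),
      (forall x y, in_valring v x -> in_valring v y -> red (x * y) = red x * red y),
      (forall x, in_valring v x -> (red x = 0 <-> in_maxideal v x))
    & (forall y : L, exists x, in_valring v x /\ red x = y)].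

Definition ebasis (n : nat) (i : 'I_n) : 'I_n -> int := fun j => (j == i)%:Z.
Definition zadd (n : nat) (a b : 'I_n -> int) : 'I_n -> int := fun j => a j + b j.
Definition zones (n : nat) : 'I_n -> int := fun _ => 1.

Definition contr_mem (L : fieldType) (n : nat) (W : {vspace 'rV[L]_n}) (i : 'I_n)
    (y : 'rV[L]_n) : Prop := y \in W /\ y ord0 i = 0.

Definition zero_coord (L : fieldType) (n : nat) (i : 'I_n) (x : 'rV[L]_n) : 'rV[L]_n :=
  \row_j (if j == i then 0 else x ord0 j).
Definition del_mem (L : fieldType) (n : nat) (W : {vspace 'rV[L]_n}) (i : 'I_n)
    (y : 'rV[L]_n) : Prop := exists2 x, x \in W & y = zero_coord i x.

(* (L, psi)-linear flock; psi is assumed to be a field automorphism of L. *)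
Definition linear_flock (L : fieldType) (psi : L -> L) (n : nat)
    (F : ('I_n -> int) -> {vspace 'rV[L]_n}) : Prop :=
  [/\ (forall a b, \dim (F a) = \dim (F b)),
      (forall a i y, contr_mem (F a) i y <-> del_mem (F (zadd a (ebasis i))) i y)
    & (forall a y, y \in F (zadd a (@zones n)) <->
                   exists2 x, x \in F a & y = map_mx psi x)].

Definition right_subspace (Q : unitRingType) (n : nat) (V : 'rV[Q]_n -> Prop) : Prop :=
  [/\ V 0,
      (forall x y, V x -> V y -> V (x + y))
    & (forall x c, V x -> V (\row_j (x ord0 j * c)))].

Definition Valpha_mem (Q : unitRingType) (v : Q -> int) (L : fieldType) (red : Q -> L)
    (pi : Q) (n : nat) (V : 'rV[Q]_n -> Prop) (a : 'I_n -> int) (y : 'rV[L]_n) : Prop :=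
  exists x, V x /\
    (forall i, in_valring v (pi ^ (- a i) * x ord0 i)) /\
    (forall i, y ord0 i = red (pi ^ (- a i) * x ord0 i)).

(* Main.v *)
Require Import Defs.
From HB Require Import structures.
From mathcomp Require Import all_boot all_order all_algebra.
From mathcomp Require Import zify.
From Stdlib Require Import Classical ClassicalEpsilon.
From Stdlib Require Import Classical ClassicalEpsilon.
Import Order.TTheory GRing.Theory Num.Theory.
Local Open Scope ring_scope.


Section Val.
Variables (Q : unitRingType) (v : Q -> int).
Hypotheses (hQ : division_ring Q) (hv : is_valuation v).
Ltac vlia := repeat match goal with H : is_true (_ != _) |- _ => clear H end;
  repeat match goal with H : context [v ?x] |- _ => revert H end;
  repeat match goal with |- context [v ?x] => generalize (v x); intro end; lia.

Lemma mulQ_neq0 {x y : Q} : x != 0 -> y != 0 -> x * y != 0.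
Proof.
move=> x0 y0; apply/eqP => hxy; move/eqP: y0; apply.
by rewrite -(mulKr (hQ _ x0) y) hxy mulr0.
Qed.

Lemma vM {x y : Q} : x != 0 -> y != 0 -> v (x * y) = v x + v y.
Proof. by case: hv => h _; apply: h. Qed.

Lemma v1 : v 1 = 0.
Proof. have h : v 1 = v 1 + v 1 by rewrite -{1}(mulr1 (1:Q)); apply: vM; apply: oner_neq0. vlia. Qed.
Lemma vV (x : Q) : x != 0 -> v x^-1 = - v x.
Proof.
move=> x0; have x'0 : x^-1 != 0 by rewrite invr_eq0.
have e : v (x * x^-1) = 0 by rewrite mulrV ?(hQ _ x0) //; exact: v1.
rewrite (vM x0 x'0) in e; vlia.
Qed.

Lemma valringM (x y : Q) : in_valring v x -> in_valring v y -> in_valring v (x * y).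
Proof.
rewrite /in_valring.
have [->|x0] := eqVneq x 0; first by rewrite mul0r; left.
have [->|y0] := eqVneq y 0; first by rewrite mulr0; left.
move=> [/eqP|hx]; first by rewrite (negbTE x0).
move=> [/eqP|hy]; first by rewrite (negbTE y0).
right; rewrite vM //; vlia.
Qed.

Lemma valringD (x y : Q) : in_valring v x -> in_valring v y -> in_valring v (x + y).
Proof.
rewrite /in_valring.
have [->|x0] := eqVneq x 0; first by rewrite add0r.
have [->|y0] := eqVneq y 0; first by rewrite addr0.
have [->|s0] := eqVneq (x + y) 0; first by left.
move=> [/eqP|hx]; first by rewrite (negbTE x0).
move=> [/eqP|hy]; first by rewrite (negbTE y0).
right; case: hv => _ h; have := h x y x0 y0 s0.
by apply: le_trans; rewrite le_min hx hy.
Qed.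

Variables (pi : Q).
Hypotheses (hpi0 : pi != 0) (hpi : v pi = 1).

Lemma pi'0 : pi^-1 != 0. Proof. by rewrite invr_eq0. Qed.
Lemma vpi' : v pi^-1 = -1. Proof. by rewrite vV // hpi. Qed.

Lemma mulpi_r (w : Q) : in_valring v w -> in_maxideal v (w * pi).
Proof.
rewrite /in_valring /in_maxideal.
have [->|w0] := eqVneq w 0; first by rewrite mul0r; left.
move=> [/eqP|hw]; first by rewrite (negbTE w0).
right; rewrite vM // hpi; vlia.
Qed.

Lemma mulpi_l (w : Q) : in_valring v w -> in_maxideal v (pi * w).
Proof.
rewrite /in_valring /in_maxideal.
have [->|w0] := eqVneq w 0; first by rewrite mulr0; left.
move=> [/eqP|hw]; first by rewrite (negbTE w0).
right; rewrite vM // hpi; vlia.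
Qed.

Lemma max_val (w : Q) : in_maxideal v w -> in_valring v w.
Proof. by case=> [->|h]; [left|right; lia]. Qed.

Lemma mulpi'_l (w : Q) : in_maxideal v w -> in_valring v (pi^-1 * w).
Proof.
rewrite /in_valring /in_maxideal.
have [->|w0] := eqVneq w 0; first by rewrite mulr0; left.
move=> [/eqP|hw]; first by rewrite (negbTE w0).
right; rewrite vM ?pi'0 // vpi'; vlia.
Qed.

Lemma mulpi'_r (w : Q) : in_maxideal v w -> in_valring v (w * pi^-1).
Proof.
rewrite /in_valring /in_maxideal.
have [->|w0] := eqVneq w 0; first by rewrite mul0r; left.
move=> [/eqP|hw]; first by rewrite (negbTE w0).
right; rewrite vM ?pi'0 // vpi'; vlia.
Qed.

Lemma vconj1 {w : Q} : w != 0 -> pi^-1 * w * pi != 0 /\ v (pi^-1 * w * pi) = v w.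
Proof.
move=> w0; have h1 := mulQ_neq0 pi'0 w0.
split; first exact: mulQ_neq0.
rewrite vM // vM ?pi'0 // vpi' hpi; vlia.
Qed.

Lemma vconj2 {w : Q} : w != 0 -> pi * w * pi^-1 != 0 /\ v (pi * w * pi^-1) = v w.
Proof.
move=> w0; have h1 := mulQ_neq0 hpi0 w0.
split; first by apply: mulQ_neq0 => //; exact: pi'0.
rewrite vM ?pi'0 // vM // vpi' hpi; vlia.
Qed.

Lemma conj1_val (w : Q) : in_valring v w -> in_valring v (pi^-1 * w * pi).
Proof.
have [->|w0] := eqVneq w 0; first by rewrite mulr0 mul0r; left.
case=> [/eqP|hw]; first by rewrite (negbTE w0).
by case: (vconj1 w0) => _ h; right; rewrite h.
Qed.

Lemma conj2_val (w : Q) : in_valring v w -> in_valring v (pi * w * pi^-1).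
Proof.
have [->|w0] := eqVneq w 0; first by rewrite mulr0 mul0r; left.
case=> [/eqP|hw]; first by rewrite (negbTE w0).
by case: (vconj2 w0) => _ h; right; rewrite h.
Qed.

Lemma conj1_max (w : Q) : in_valring v w -> ~ in_maxideal v w -> ~ in_maxideal v (pi^-1 * w * pi).
Proof.
have [->|w0] := eqVneq w 0; first by move=> _ []; left.
case=> [/eqP|hw]; first by rewrite (negbTE w0).
move=> nm; case: (vconj1 w0) => c0 e; case=> [/eqP|h]; first by rewrite (negbTE c0).
by apply: nm; right; rewrite -e.
Qed.

Lemma conj2_max (w : Q) : in_valring v w -> ~ in_maxideal v w -> ~ in_maxideal v (pi * w * pi^-1).
Proof.
have [->|w0] := eqVneq w 0; first by move=> _ []; left.
case=> [/eqP|hw]; first by rewrite (negbTE w0).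
move=> nm; case: (vconj2 w0) => c0 e; case=> [/eqP|h]; first by rewrite (negbTE c0).
by apply: nm; right; rewrite -e.
Qed.

Lemma piexp1 (k : int) : pi ^ (- (k + 1)) = pi^-1 * pi ^ (- k).
Proof.
have -> : - (k + 1) = -1 + - k by vlia.
by rewrite exprzDr ?(hQ _ hpi0) // -exprz_inv expr1z.
Qed.

Lemma piexp2 (k : int) : pi ^ (- k) = pi * pi ^ (- (k + 1)).
Proof. by rewrite piexp1 mulrA mulrV ?(hQ _ hpi0) // mul1r. Qed.

End Val.
Section Vec.
Variables (L : fieldType) (n : nat).

Lemma vspace_of (S : 'rV[L]_n -> Prop) : S 0 ->
  (forall x y, S x -> S y -> S (x + y)) -> (forall c x, S x -> S (c *: x)) ->
  exists U : {vspace 'rV[L]_n}, forall y, y \in U <-> S y.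
Proof.
move=> S0 SD SZ.
suff H : forall k (U : {vspace 'rV[L]_n}), (forall u, u \in U -> S u) ->
  (\dim (fullv : {vspace 'rV[L]_n}) - \dim U <= k)%N ->
  exists U : {vspace 'rV[L]_n}, forall y, y \in U <-> S y.
  apply: (H _ 0%VS) => [u|]; last exact: leqnn.
  by rewrite memv0 => /eqP ->.
elim=> [|k IH] U US hk.
  exists U => y; split; first exact: US.
  move=> _; have : U = fullv.
    apply/eqP; rewrite eqEdim subvf /=; by rewrite leqn0 subn_eq0 in hk.
  by move=> ->; rewrite memvf.
case: (classic (forall y, S y -> y \in U)) => [hall|].
  by exists U => y; split; [exact: US | exact: hall].
move=> nall; have [y hy] := not_all_ex_not _ _ nall; have [Sy yU] := imply_to_and _ _ hy.
apply: (IH (U + <[y]>)%VS).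
  move=> u /memv_addP [a aU [b /vlineP [c ->] ->]].
  by apply: SD; [exact: US | exact: SZ].
have sub : (U <= U + <[y]>)%VS by exact: addvSl.
have ne : U != (U + <[y]>)%VS.
  apply/eqP => e; apply: yU; rewrite e.
  by apply: (subvP (addvSr U <[y]>)); exact: memv_line.
have ltd : (\dim U < \dim (U + <[y]>))%N by rewrite (ltn_leqif (dimv_leqif_eq sub)).
clear ne.
have le : (\dim (U + <[y]>) <= \dim (fullv : {vspace 'rV[L]_n}))%N by apply: dimvS; exact: subvf.
move: hk ltd le; set a := \dim _; set b := \dim U; set c := \dim (_ + _)%VS.
move=> hk ne le; lia.
Qed.

Definition Pm (i : 'I_n) : 'M[L]_n := diag_mx (\row_j ((j != i)%:R)).
Definition Hm (i : 'I_n) : 'M[L]_n := diag_mx (\row_j ((j == i)%:R)).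
Definition Pf i : 'End('rV[L]_n) := linfun (mulmxr (Pm i)).
Definition Hf i : 'End('rV[L]_n) := linfun (mulmxr (Hm i)).

Lemma PfE i u : Pf i u = zero_coord i u.
Proof.
rewrite lfunE /= mul_mx_diag; apply/matrixP => a j; rewrite !mxE (ord1 a).
by case: (j == i); rewrite /= ?mulr0 ?mulr1.
Qed.

Lemma HfE i u : Hf i u = u ord0 i *: delta_mx ord0 i.
Proof.
rewrite lfunE /= mul_mx_diag; apply/matrixP => a j; rewrite !mxE (ord1 a) eqxx /=.
by case: eqP => [->|_]; rewrite ?mulr0 ?mulr1 // (ord1 a).
Qed.

Lemma delta_neq0 i : delta_mx ord0 i != 0 :> 'rV[L]_n.
Proof.
apply/eqP => /matrixP /(_ ord0 i); rewrite !mxE !eqxx /=; apply/eqP; exact: oner_neq0.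
Qed.

Lemma zc_scale i c : zero_coord i (c *: delta_mx ord0 i) = 0 :> 'rV[L]_n.
Proof.
apply/matrixP => a j; rewrite !mxE eqxx /=.
by case: (j == i); rewrite ?mulr0.
Qed.

Lemma zc_eq0 i (y : 'rV[L]_n) : zero_coord i y = 0 -> y = y ord0 i *: delta_mx ord0 i.
Proof.
move=> /matrixP h; apply/matrixP => a j; have := h a j; rewrite !mxE (ord1 a) eqxx /=.
by case: eqP => [->|_ ->]; rewrite ?mulr1 ?mulr0.
Qed.

Lemma dim_step (W W' : {vspace 'rV[L]_n}) i :
  (forall y, (y \in W /\ y ord0 i = 0) <-> exists2 x, x \in W' & y = zero_coord i x) ->
  ((exists2 y, y \in W & y ord0 i != 0) <-> delta_mx ord0 i \in W') ->
  \dim W = \dim W'.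
Proof.
move=> h1 h2.
rewrite -(limg_ker_dim (Hf i) W) -(limg_ker_dim (Pf i) W') addnC.
congr (_ + _)%N.
  congr (\dim _); apply/vspaceP => y.
  apply/idP/idP.
  - move=> /memv_imgP [w wW ->]; rewrite HfE.
    have [c0|cn0] := eqVneq (w ord0 i) 0.
      by rewrite c0 scale0r memv_cap mem0v /= memv_ker linear0.
    rewrite memv_cap memv_ker PfE zc_scale eqxx andbT.
    by apply: memvZ; apply/h2; exists w.
  - rewrite memv_cap memv_ker PfE => /andP [yW /eqP /zc_eq0 ey].
    have [c0|cn0] := eqVneq (y ord0 i) 0.
      rewrite ey c0 scale0r; apply/memv_imgP; exists 0; first exact: mem0v.
      by rewrite HfE mxE scale0r.
    have eW : delta_mx ord0 i \in W'.
      have -> : delta_mx ord0 i = (y ord0 i)^-1 *: y.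
        by rewrite {2}ey scalerA mulVf // scale1r.
      exact: memvZ.
    have [w wW wi] := (proj2 h2) eW.
    apply/memv_imgP; exists ((y ord0 i / w ord0 i) *: w); first exact: memvZ.
    by rewrite HfE mxE divfK // -ey.
congr (\dim _); apply/vspaceP => y.
rewrite memv_cap memv_ker HfE.
apply/idP/idP.
- move=> /andP [yW]; rewrite scaler_eq0 (negbTE (delta_neq0 i)) orbF => /eqP yi.
  have [x xW ->] := (proj1 (h1 y)) (conj yW yi).
  by rewrite -PfE; exact: memv_img.
- move=> /memv_imgP [x xW ->]; rewrite PfE.
  have [h _] := h1 (zero_coord i x).
  have [zW zi] : zero_coord i x \in W /\ zero_coord i x ord0 i = 0.
    by apply/h1; exists x.
  by rewrite zW zi scale0r eqxx.
Qed.

End Vec.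

Section Main.
Variables (Q : unitRingType) (v : Q -> int) (L : fieldType) (red : Q -> L)
    (pi : Q) (phi phiinv : L -> L) (n : nat) (V : 'rV[Q]_n -> Prop).
Hypotheses (hQ : division_ring Q) (hv : is_valuation v) (hvs : surjective_valuation v)
    (hred : is_residue_map v red)
    (hpi0 : pi != 0) (hpi : v pi = 1)
    (hphi : forall x, in_valring v x -> phi (red x) = red (pi * x * pi^-1))
    (hinv1 : forall y, phi (phiinv y) = y) (hinv2 : forall y, phiinv (phi y) = y)
    (hV : right_subspace V).

Local Notation S := (Valpha_mem v red pi V).
Let RM := @valringM Q v hv.
Let RD := @valringD Q v hv.
Let MV := @max_val Q v pi hpi0 hpi.
Let Pl := @mulpi_l Q v hv pi hpi0 hpi.
Let Pr := @mulpi_r Q v hv pi hpi0 hpi.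
Let P'l := @mulpi'_l Q v hQ hv pi hpi0 hpi.
Let P'r := @mulpi'_r Q v hQ hv pi hpi0 hpi.
Let C1v := @conj1_val Q v hQ hv pi hpi0 hpi.
Let C2v := @conj2_val Q v hQ hv pi hpi0 hpi.
Let C1m := @conj1_max Q v hQ hv pi hpi0 hpi.
Let C2m := @conj2_max Q v hQ hv pi hpi0 hpi.
Let PE1 := @piexp1 Q v hQ pi hpi0 hpi.
Let PE2 := @piexp2 Q v hQ pi hpi0 hpi.

Lemma red_ker (w : Q) : in_valring v w -> (red w = 0 <-> in_maxideal v w).
Proof. by case: hred => _ _ _ hk _; apply: hk. Qed.

Lemma red0 : red 0 = 0.
Proof. by apply/red_ker; left. Qed.

Lemma redD (x y : Q) : in_valring v x -> in_valring v y -> red (x + y) = red x + red y.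
Proof. by case: hred => _ hD _ _ _; apply: hD. Qed.

Lemma redM (x y : Q) : in_valring v x -> in_valring v y -> red (x * y) = red x * red y.
Proof. by case: hred => _ _ hM _ _; apply: hM. Qed.

Lemma unitpi : pi \is a GRing.unit. Proof. exact: hQ. Qed.

Lemma S0 (a : 'I_n -> int) : S a 0.
Proof.
case: hV => V0 _ _; exists 0; split => //; split => i; have -> : (0 : 'rV[Q]_n) ord0 i = 0 by rewrite mxE.
all: rewrite mulr0.
  by left.
by rewrite red0 mxE.
Qed.

Lemma SD (a : 'I_n -> int) (x y : 'rV[L]_n) : S a x -> S a y -> S a (x + y).
Proof.
case: hV => _ VD _ [x1 [V1 [R1 E1]]] [x2 [V2 [R2 E2]]].
exists (x1 + x2); split; first exact: VD.
split => i; rewrite !mxE mulrDr; first exact: RD _ _ (R1 i) (R2 i).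
by rewrite redD // E1 E2.
Qed.

Lemma SZ (a : 'I_n -> int) (c : L) (x : 'rV[L]_n) : S a x -> S a (c *: x).
Proof.
case: hV => _ _ VZ [x1 [V1 [R1 E1]]].
case: hred => _ _ _ _ hsurj; have [r [Rr er]] := hsurj c.
exists (\row_j (x1 ord0 j * r)); split; first exact: VZ.
split => i; rewrite !mxE mulrA; first exact: (RM _ _ (R1 i) Rr).
by rewrite redM // E1 er mulrC.
Qed.

Lemma zaddE (a : 'I_n -> int) (i j : 'I_n) : zadd a (ebasis i) j = if j == i then a j + 1 else a j.
Proof. by rewrite /zadd /ebasis; case: eqP; rewrite ?addr0. Qed.

Lemma flock1 (a : 'I_n -> int) (i : 'I_n) (y : 'rV[L]_n) : (S a y /\ y ord0 i = 0) <->
  exists2 z, S (zadd a (ebasis i)) z & y = zero_coord i z.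
Proof.
split.
- move=> [[x [Vx [Rx Ex]]] yi].
  exists (\row_j red (pi ^ (- zadd a (ebasis i) j) * x ord0 j)).
    exists x; split => //; split => j; rewrite ?mxE //.
    rewrite zaddE; case: eqP => [->|_]; last exact: Rx.
    rewrite PE1 -mulrA; apply: P'l.
    by apply/red_ker; [exact: Rx | rewrite -Ex].
  apply/matrixP => o j; rewrite !mxE (ord1 o) zaddE.
  by case: eqP => [->|_] //; rewrite Ex.
- move=> [z [x [Vx [Rx Ex]]] ->]; split; last by rewrite mxE eqxx.
  exists x; split => //; split => j.
    have := Rx j; rewrite zaddE; case: eqP => [->|_] Rj; last exact: Rj.
    by rewrite PE2 -mulrA; apply: MV; apply: Pl.
  have := Rx i; have := Ex j; rewrite !mxE !zaddE eqxx.
  case: eqP => [->|_] Ej Ri; last exact: Ej.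
  apply/esym/red_ker; rewrite PE2 -mulrA.
    by apply: MV; exact: Pl.
  exact: Pl.
Qed.

Lemma conj_cancel (w : Q) : pi * (pi^-1 * w * pi) * pi^-1 = w.
Proof. by rewrite !mulrA mulrV ?unitpi // mul1r mulrK ?unitpi. Qed.

Lemma shape2 (k : int) (w : Q) : pi ^ (- k) * (w * pi^-1) = pi * (pi ^ (- (k + 1)) * w) * pi^-1.
Proof. by rewrite PE2 mulrA -(mulrA pi). Qed.

Lemma shape1 (k : int) (w : Q) : pi ^ (- (k + 1)) * (w * pi) = pi^-1 * (pi ^ (- k) * w) * pi.
Proof. by rewrite PE1 mulrA -(mulrA pi^-1). Qed.

Lemma flock2 (a : 'I_n -> int) (y : 'rV[L]_n) : S (zadd a (@zones n)) y <-> exists2 x, S a x & y = map_mx phiinv x.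
Proof.
case: hV => _ _ VZ.
rewrite /zadd /zones.
split.
- move=> [x [Vx [Rx Ex]]].
  exists (\row_j red (pi ^ (- a j) * (x ord0 j * pi^-1))).
    exists (\row_j (x ord0 j * pi^-1)); split; first exact: VZ.
    split => j; rewrite !mxE //.
    by rewrite shape2; apply: C2v; exact: Rx.
  apply/matrixP => o j; rewrite !mxE (ord1 o) Ex shape2.
  by rewrite -hphi ?hinv2 //; exact: Rx.
- move=> [x [x1 [V1 [R1 E1]]] ->].
  exists (\row_j (x1 ord0 j * pi)); split; first exact: VZ.
  split => j; rewrite !mxE shape1.
    by apply: C1v; exact: R1.
  rewrite E1; set w := pi ^ (- a j) * x1 ord0 j.
  have Rc : in_valring v (pi^-1 * w * pi) by apply: C1v; exact: R1.
  by rewrite -{1}(conj_cancel w) -hphi // hinv2.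
Qed.

Lemma flock_e (a : 'I_n -> int) (i : 'I_n) : (exists2 y, S a y & y ord0 i != 0) <->
  S (zadd a (ebasis i)) (delta_mx ord0 i).
Proof.
case: hV => _ _ VZ.
split.
- move=> [y [x [Vx [Rx Ex]]] yi].
  pose z := \row_j red (pi ^ (- zadd a (ebasis i) j) * (x ord0 j * pi)).
  have Sz : S (zadd a (ebasis i)) z.
    exists (\row_j (x ord0 j * pi)); split; first exact: VZ.
    split => j; rewrite !mxE //.
    rewrite zaddE; case: eqP => [->|_].
      by rewrite shape1; apply: C1v; exact: Rx.
    by rewrite mulrA; apply: MV; apply: Pr; exact: Rx.
  have wnm : ~ in_maxideal v (pi ^ (- a i) * x ord0 i).
    by move=> /(proj2 (red_ker _ (Rx i))); rewrite -Ex => /eqP; rewrite (negbTE yi).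
  have zi : z ord0 i != 0.
    rewrite mxE zaddE eqxx shape1; apply/eqP.
    move=> /(proj1 (red_ker _ (C1v _ (Rx i)))).
    exact: (C1m _ (Rx i) wnm).
  have -> : delta_mx ord0 i = (z ord0 i)^-1 *: z.
    apply/matrixP => o j; rewrite !mxE (ord1 o) eqxx /=.
    case: (eqVneq j i) => [->|ne].
      by rewrite mulVf //; move: zi; rewrite mxE.
    rewrite /= (zaddE a i j) (negbTE ne) (mulrA (pi ^ (- a j))); apply/esym/eqP; rewrite mulf_eq0; apply/orP; right.
    apply/eqP/red_ker; first by apply: MV; apply: Pr; exact: Rx.
    by apply: Pr; exact: Rx.
  exact: SZ.
- move=> [x [Vx [Rx Ex]]].
  have Ri := Rx i; have Ei := Ex i.
  rewrite mxE eqxx zaddE eqxx in Ei; rewrite zaddE eqxx in Ri.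
  have unm : ~ in_maxideal v (pi ^ (- (a i + 1)) * x ord0 i).
    by move=> /(proj2 (red_ker _ Ri)); rewrite -Ei => /eqP; rewrite oner_eq0.
  exists (\row_j red (pi ^ (- a j) * (x ord0 j * pi^-1))).
    exists (\row_j (x ord0 j * pi^-1)); split; first exact: VZ.
    split => j; rewrite !mxE //.
    have Rj := Rx j; have Ej := Ex j; rewrite zaddE in Rj Ej.
    move: Rj Ej; case: eqP => [->|ne] Rj Ej.
      by rewrite shape2; apply: C2v.
    rewrite mulrA; apply: P'r; apply/red_ker => //.
    by rewrite -Ej mxE; move/eqP: ne => /negbTE ->; rewrite andbF.
  rewrite mxE shape2; apply/eqP.
  move=> /(proj1 (red_ker _ (C2v _ Ri))).
  exact: (C2m _ Ri unm).
Qed.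

Lemma main_thm : exists F : ('I_n -> int) -> {vspace 'rV[L]_n},
    (forall a y, y \in F a <-> Valpha_mem v red pi V a y) /\
    linear_flock phiinv F.
Proof.
have hex : forall a, exists U : {vspace 'rV[L]_n}, forall y, y \in U <-> S a y.
  move=> a; apply: vspace_of; [exact: S0 | exact: SD | exact: SZ].
pose F a := proj1_sig (constructive_indefinite_description _ (hex a)).
have hF : forall a y, y \in F a <-> S a y.
  by move=> a y; exact: (proj2_sig (constructive_indefinite_description _ (hex a)) y).
exists F; split => //.
have Fext : forall a b, a =1 b -> F a = F b.
  move=> a b e; apply/vspaceP => y; apply/idP/idP => /hF [x [Vx [Rx Ex]]]; apply/hF;
    exists x; split => //; split => i.
  - by rewrite -e; exact: Rx.
  - by rewrite -e; exact: Ex.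
  - by rewrite e; exact: Rx.
  - by rewrite e; exact: Ex.
have step : forall a i, \dim (F a) = \dim (F (zadd a (ebasis i))).
  move=> a i; apply: dim_step.
  - move=> y; split.
      move=> [/hF ya yi]; have [z zs ->] := (proj1 (flock1 a i y)) (conj ya yi).
      by exists z => //; apply/hF.
    move=> [z /hF zs ->].
    have [h1 h2] := (proj2 (flock1 a i (zero_coord i z))) (ex_intro2 _ _ z zs erefl).
    by split => //; apply/hF.
  - split.
      move=> [y /hF ys yi]; apply/hF; apply/(proj1 (flock_e a i)); by exists y.
    by move=> /hF /(proj2 (flock_e a i)) [y ys yi]; exists y => //; apply/hF.
have shiftP : forall a i (m : nat),
    \dim (F a) = \dim (F (fun j => if j == i then a j + m%:Z else a j)).
  move=> a i; elim=> [|m IH].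
    by congr (\dim _); apply: Fext => j; case: eqP => // _; rewrite addr0.
  rewrite IH (step _ i); congr (\dim _); apply: Fext => j; rewrite zaddE.
  by case: eqP => // _; lia.
have shiftZ : forall a i (k : int),
    \dim (F a) = \dim (F (fun j => if j == i then a j + k else a j)).
  move=> a i [m|m]; first exact: shiftP.
  set b := (fun j => _).
  rewrite (shiftP b i m.+1); congr (\dim _); apply: Fext => j; rewrite /b.
  by case: eqP => // _; rewrite NegzE; lia.
have alld : forall a b, \dim (F a) = \dim (F b).
  move=> a b.
  pose g (m : nat) := fun j : 'I_n => if (j < m)%N then b j else a j.
  have gS : forall m, \dim (F (g m)) = \dim (F (g m.+1)).
    move=> m; case: (ltnP m n) => hm.
      rewrite (shiftZ (g m) (Ordinal hm) (b (Ordinal hm) - a (Ordinal hm))).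
      congr (\dim _); apply: Fext => j; rewrite /g.
      case: (eqVneq j (Ordinal hm)) => [->|ne] /=.
        by rewrite ltnn ltnSn addrC subrK.
      have h : ((j : nat) != m).
        by apply: contra ne => /eqP e; apply/eqP/val_inj.
      by rewrite (@ltnS j m) (leq_eqVlt j m) (negbTE h).
    congr (\dim _); apply: Fext => j; rewrite /g.
    have h1 : (j < m)%N := leq_trans (ltn_ord j) hm.
    by rewrite h1 ltnS ltnW.
  have gn : forall m, \dim (F (g m)) = \dim (F a).
    elim => [|m IH]; last by rewrite -gS.
    by congr (\dim _); apply: Fext.
  by rewrite -(gn n); congr (\dim _); apply: Fext => j; rewrite /g ltn_ord.
rewrite /linear_flock; split.
- exact: alld.
- move=> a i y; split.
    move=> [/hF ya yi]; have [z zs ->] := (proj1 (flock1 a i y)) (conj ya yi).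
    by exists z => //; apply/hF.
  move=> [z /hF zs ->].
  have [h1 h2] := (proj2 (flock1 a i (zero_coord i z))) (ex_intro2 _ _ z zs erefl).
  by split => //; apply/hF.
- move=> a y; split.
    by move=> /hF /(proj1 (flock2 a y)) [x xs ->]; exists x => //; apply/hF.
  by move=> [x /hF xs ->]; apply/hF/(proj2 (flock2 a _)); exists x.
Qed.

End Main.

Theorem lemma3p4 (Q : unitRingType) (v : Q -> int) (L : fieldType) (red : Q -> L)
    (pi : Q) (phi phiinv : L -> L) (n : nat) (V : 'rV[Q]_n -> Prop)
    (hQ : division_ring Q) (hv : is_valuation v) (hvs : surjective_valuation v)
    (hred : is_residue_map v red)
    (hpi0 : pi != 0) (hpi : v pi = 1)
    (hphi : forall x, in_valring v x -> phi (red x) = red (pi * x * pi^-1))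
    (hinv1 : forall y, phi (phiinv y) = y) (hinv2 : forall y, phiinv (phi y) = y)
    (hV : right_subspace V) :
  exists F : ('I_n -> int) -> {vspace 'rV[L]_n},
    (forall a y, y \in F a <-> Valpha_mem v red pi V a y) /\
    linear_flock phiinv F.
Proof.
exact: (@main_thm Q v L red pi phi phiinv n V hQ hv hred hpi0 hpi hphi hinv2 hV).
Qed.
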